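(* Let $\alpha_0>\alpha_1>0$ and let $x_1^\circ>x_2^\circ$ be integers. Let $\mathrm{FS}_{x_1^\circ,x_2^\circ}$ denote the two-car system (continuous-time TASEP with two particles) in which the front car starts at $x_1^\circ$ and has speed $\alpha_0$, and the back car starts at $x_2^\circ$ and has speed $\alpha_1$. Let $G$ be a random variable independent of everything else with $\mathbb{P}(G=k)=(1-\alpha_1/\alpha_0)(\alpha_1/\alpha_0)^k$, $k\in\mathbb{Z}_{\ge0}$, and set $$y_1^\circ:=x_2^\circ+1+\min\bigl(G,\;x_1^\circ-x_2^\circ-1\bigr).$$ Let $\mathrm{SF}_{y_1^\circ,x_2^\circ}$ denote the two-car system in which the front car starts at the (random) position $y_1^\circ$ and has speed $\alpha_1$, and the back car starts at $x_2^\circ$ and has speed $\alpha_0$. Then the trajectory $\{x_2(t)\}_{t\in\mathbb{R}_{\ge0}}$ of the car in the back has the same distribution (as a process) in $\mathrm{FS}_{x_1^\circ,x_2^\circ}$ and in $\mathrm{SF}_{y_1^\circ,x_2^\circ}$.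
   Context: Two-car system: two particles at integer positions $x_1(t)>x_2(t)$ evolving in continuous time $t\ge0$. Each car carries an independent exponential clock whose rate is the car's speed. When a car's clock rings, the car jumps by $1$ to the right, provided the destination is not occupied by the other car; otherwise the jump is suppressed. In particular the front car performs a Poisson simple random walk with rate equal to its speed. *)

(* Defs.v *)
From Stdlib Require Import Reals ZArith List Bool.
From Coquelicot Require Import Coquelicot.
Open Scope R_scope.
Open Scope bool_scope.

(** State of a two-car system: (x1, x2) = (front position, back position),
    meaningful when x1 > x2. *)
Definition state : Type := (Z * Z)%type.

(** Generator (Q-matrix) of the two-car system with front speed [vf] and back
    speed [vb]: the front car jumps +1 at rate vf; the back car jumps +1 at
    rate vb unless the target site x2+1 is occupied by the front car. *)
Definition gen (vf vb : R) (s s' : state) : R :=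
  let (a, b) := s in
  let (a', b') := s' in
  (if (a' =? a + 1)%Z && (b' =? b)%Z then vf else 0)
  + (if (a' =? a)%Z && (b' =? b + 1)%Z && (b + 1 <? a)%Z then vb else 0)
  - (if (a' =? a)%Z && (b' =? b)%Z
     then vf + (if (b + 1 <? a)%Z then vb else 0) else 0).

(** Matrix powers Q^n(s,s').  Since Q(s'',s') <> 0 only for
    s'' in {(a'-1,b'), (a',b'-1), (a',b')}, the product
    Q^(n+1)(s,s') = sum_{s''} Q^n(s,s'') Q(s'',s') is this finite sum. *)
Fixpoint gen_pow (vf vb : R) (n : nat) (s s' : state) : R :=
  match n with
  | O => if (fst s =? fst s')%Z && (snd s =? snd s')%Z then 1 else 0
  | S m =>
      let (a', b') := s' in
      gen_pow vf vb m s ((a' - 1)%Z, b') * gen vf vb ((a' - 1)%Z, b') s'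
      + gen_pow vf vb m s (a', (b' - 1)%Z) * gen vf vb (a', (b' - 1)%Z) s'
      + gen_pow vf vb m s s' * gen vf vb s' s'
  end.

Definition trans (vf vb t : R) (s s' : state) : R :=
  Series (fun n => t ^ n / INR (fact n) * gen_pow vf vb n s s').

(** For l = [(d1,k1); ...; (dm,km)] with increments d_i >= 0 and
    t_i = d1 + ... + d_i,
    [back_fdd vf vb s l] = P_s( x2(t1) = k1, ..., x2(tm) = km ),
    obtained by the Markov property, summing over the (unobserved) front
    position x1(t_i) = k_i + 1 + j, j >= 0. *)
Fixpoint back_fdd (vf vb : R) (s : state) (l : list (R * Z)) : R :=
  match l with
  | nil => 1
  | (d, k) :: rest =>
      Series (fun j : nat =>
        trans vf vb d s ((k + 1 + Z.of_nat j)%Z, k)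
        * back_fdd vf vb ((k + 1 + Z.of_nat j)%Z, k) rest)
  end.

(* Main.v *)
Require Import Defs.
From Stdlib Require Import Reals ZArith List Lia Lra.
From Coquelicot Require Import Coquelicot.
Open Scope R_scope.


Ltac zdes := repeat (match goal with
  | |- context [Z.eqb ?x ?y] => destruct (Z.eqb_spec x y); try (exfalso; lia)
  | |- context [Z.ltb ?x ?y] => destruct (Z.ltb_spec x y); try (exfalso; lia)
  end; cbn [andb]).

Lemma gen_r vf vb a b : gen vf vb (a,b) ((a+1)%Z,b) = vf.
Proof. unfold gen. zdes; ring. Qed.
Lemma gen_u vf vb a b : gen vf vb (a,b) (a,(b+1)%Z) = if (b+1 <? a)%Z then vb else 0.
Proof. unfold gen. zdes; ring. Qed.
Lemma gen_d vf vb a b : gen vf vb (a,b) (a,b) = - (vf + if (b+1 <? a)%Z then vb else 0).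
Proof. unfold gen. zdes; ring. Qed.
Lemma gen_0 vf vb a b a' b' : ~ (a' = a+1 /\ b' = b)%Z -> ~ (a' = a /\ b' = b+1)%Z -> ~(a'=a /\ b'=b)%Z ->
  gen vf vb (a,b) (a',b') = 0.
Proof. intros. unfold gen. zdes; try ring; tauto. Qed.

Lemma gp_S vf vb n s a' b' : gen_pow vf vb (S n) s (a',b') =
  gen_pow vf vb n s ((a' - 1)%Z, b') * gen vf vb ((a' - 1)%Z, b') (a',b')
  + gen_pow vf vb n s (a', (b' - 1)%Z) * gen vf vb (a', (b' - 1)%Z) (a',b')
  + gen_pow vf vb n s (a',b') * gen vf vb (a',b') (a',b').
Proof. reflexivity. Qed.


Lemma gp_back vf vb n : forall a b s',
  gen_pow vf vb (S n) (a,b) s' =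
  gen vf vb (a,b) ((a+1)%Z,b) * gen_pow vf vb n ((a+1)%Z,b) s'
  + gen vf vb (a,b) (a,(b+1)%Z) * gen_pow vf vb n (a,(b+1)%Z) s'
  + gen vf vb (a,b) (a,b) * gen_pow vf vb n (a,b) s'.
Proof.
  induction n; intros a b [a' b'].
  - rewrite gp_S. cbn [gen_pow fst snd].
    repeat (match goal with
    | |- context [Z.eqb ?x ?y] => destruct (Z.eqb_spec x y); try (exfalso; lia)
    end; cbn [andb]); subst;
    repeat match goal with
    | |- context [(?x + 1 - 1)%Z] => replace (x+1-1)%Z with x by lia
    | |- context [(?x - 1 + 1)%Z] => replace (x-1+1)%Z with x by lia
    end; ring.
  - set (Q := gen vf vb).
    set (s := (a,b)). set (s1 := ((a+1)%Z,b)). set (s2 := (a,(b+1)%Z)).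
    set (t1 := ((a'-1)%Z,b')). set (t2 := (a',(b'-1)%Z)). set (t := (a',b')).
    transitivity (
      (Q s s1 * gen_pow vf vb n s1 t1 + Q s s2 * gen_pow vf vb n s2 t1 + Q s s * gen_pow vf vb n s t1) * Q t1 t
    + (Q s s1 * gen_pow vf vb n s1 t2 + Q s s2 * gen_pow vf vb n s2 t2 + Q s s * gen_pow vf vb n s t2) * Q t2 t
    + (Q s s1 * gen_pow vf vb n s1 t + Q s s2 * gen_pow vf vb n s2 t + Q s s * gen_pow vf vb n s t) * Q t t).
    + unfold t. rewrite (gp_S vf vb (S n)). fold t1 t2 t. unfold s, s1, s2. rewrite <- !(IHn a b). reflexivity.
    + unfold t. rewrite !(gp_S vf vb n). unfold Q, s, s1, s2, t1, t2, t in *. ring.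
Qed.


Ltac zdes2 := repeat (match goal with
  | |- context [Z.eqb ?x ?y] => destruct (Z.eqb_spec x y); try (exfalso; lia)
  | |- context [Z.ltb ?x ?y] => destruct (Z.ltb_spec x y); try (exfalso; lia)
  | |- context [Z.leb ?x ?y] => destruct (Z.leb_spec x y); try (exfalso; lia)
  end; cbn [andb]).

Definition Lop vf vb (f : state -> R) (s : state) : R :=
  gen vf vb s ((fst s + 1)%Z, snd s) * f ((fst s + 1)%Z, snd s)
  + gen vf vb s (fst s, (snd s + 1)%Z) * f (fst s, (snd s + 1)%Z)
  + gen vf vb s s * f s.

Lemma Lop_ab vf vb f a b : Lop vf vb f (a,b) =
  gen vf vb (a,b) ((a + 1)%Z, b) * f ((a + 1)%Z, b)
  + gen vf vb (a,b) (a, (b + 1)%Z) * f (a, (b + 1)%Z)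
  + gen vf vb (a,b) (a,b) * f (a,b).
Proof. reflexivity. Qed.

Definition Find (k : Z) (h : nat -> R) (s : state) : R :=
  if ((snd s =? k)%Z && (k <? fst s)%Z)%bool then h (Z.to_nat (fst s - k - 1)) else 0.

Lemma sum_ind N : forall z (h : nat -> R),
  sum_f_R0 (fun j => (if (z =? Z.of_nat j)%Z then 1 else 0) * h j) N
  = if ((0 <=? z) && (z <=? Z.of_nat N))%Z%bool then h (Z.to_nat z) else 0.
Proof.
  induction N; intros z h.
  - simpl. zdes2; try ring. subst. simpl. ring.
  - rewrite tech5, IHN. zdes2; try ring; try (subst; rewrite Nat2Z.id; ring).
Qed.

Lemma sum_lin3 c1 c2 c3 u v w N :
  sum_f_R0 (fun j => c1 * u j + c2 * v j + c3 * w j) N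
  = c1 * sum_f_R0 u N + c2 * sum_f_R0 v N + c3 * sum_f_R0 w N.
Proof. induction N; simpl; [ring|rewrite IHN; ring]. Qed.

Lemma sum_scal_l c u N : sum_f_R0 (fun j => c * u j) N = c * sum_f_R0 u N.
Proof. induction N; simpl; [ring|rewrite IHN; ring]. Qed.

Lemma sum_iter vf vb k h n : forall a b N,
  (a + Z.of_nat n <= k + 1 + Z.of_nat N)%Z ->
  sum_f_R0 (fun j => gen_pow vf vb n (a,b) ((k+1+Z.of_nat j)%Z, k) * h j) N
  = Nat.iter n (Lop vf vb) (Find k h) (a,b).
Proof.
  induction n; intros a b N HN.
  - change (Nat.iter 0 (Lop vf vb) (Find k h) (a,b)) with (Find k h (a,b)).
    cbn [gen_pow fst snd]. unfold Find. cbn [fst snd].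
    destruct (Z.eqb_spec b k).
    + subst.
      assert (E : forall i, (if ((a =? k + 1 + Z.of_nat i)%Z && true)%bool then 1 else 0) * h i
                 = (if (a - k - 1 =? Z.of_nat i)%Z then 1 else 0) * h i).
      { intro i. destruct (Z.eqb_spec a (k + 1 + Z.of_nat i)); destruct (Z.eqb_spec (a - k - 1) (Z.of_nat i)); simpl; try lia; ring. }
      rewrite (sum_eq _ _ N (fun i _ => E i)).
      rewrite sum_ind. simpl andb.
      destruct (Z.ltb_spec k a); destruct (Z.leb_spec 0 (a-k-1)); destruct (Z.leb_spec (a-k-1) (Z.of_nat N)); simpl; try lia; reflexivity.
    + cbn [andb]. apply sum_eq_R0. intros i _. zdes2; ring.
  - rewrite (sum_eq _ (fun j =>
       gen vf vb (a,b) ((a+1)%Z,b) * (gen_pow vf vb n ((a+1)%Z,b) ((k+1+Z.of_nat j)%Z, k) * h j)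
     + gen vf vb (a,b) (a,(b+1)%Z) * (gen_pow vf vb n (a,(b+1)%Z) ((k+1+Z.of_nat j)%Z, k) * h j)
     + gen vf vb (a,b) (a,b) * (gen_pow vf vb n (a,b) ((k+1+Z.of_nat j)%Z, k) * h j))).
    + rewrite sum_lin3. rewrite !IHn by lia. rewrite Nat.iter_succ. rewrite Lop_ab. ring.
    + intros i _. rewrite gp_back. ring.
Qed.

Lemma gp_supp vf vb n : forall x1 x2 a b, (x1 + Z.of_nat n < a)%Z ->
  gen_pow vf vb n (x1,x2) (a,b) = 0.
Proof.
  induction n; intros x1 x2 a b H.
  - cbn. zdes2; reflexivity.
  - rewrite gp_S. rewrite !IHn by lia. ring.
Qed.

Definition Gb vf vb := 2 * (Rabs vf + Rabs vb).
Definition Mb vf vb := 3 * Gb vf vb.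

Lemma gen_bound vf vb s s' : Rabs (gen vf vb s s') <= Gb vf vb.
Proof.
  destruct s as [a b], s' as [a' b']. unfold gen, Gb.
  pose proof (Rle_abs vf). pose proof (Rle_abs (-vf)). pose proof (Rle_abs vb). pose proof (Rle_abs (-vb)).
  rewrite Rabs_Ropp in *.
  zdes2; apply Rabs_le; lra.
Qed.

Lemma Mb_pos vf vb : 0 <= Mb vf vb.
Proof. unfold Mb, Gb. pose proof (Rabs_pos vf). pose proof (Rabs_pos vb). lra. Qed.

Lemma abs3 x1 y1 x2 y2 x3 y3 A B :
  Rabs x1 <= A -> Rabs x2 <= A -> Rabs x3 <= A -> Rabs y1 <= B -> Rabs y2 <= B -> Rabs y3 <= B ->
  Rabs (x1 * y1 + x2 * y2 + x3 * y3) <= 3 * (A * B).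
Proof.
  intros.
  assert (Rabs (x1*y1) <= A*B) by (rewrite Rabs_mult; apply Rmult_le_compat; auto using Rabs_pos).
  assert (Rabs (x2*y2) <= A*B) by (rewrite Rabs_mult; apply Rmult_le_compat; auto using Rabs_pos).
  assert (Rabs (x3*y3) <= A*B) by (rewrite Rabs_mult; apply Rmult_le_compat; auto using Rabs_pos).
  pose proof (Rabs_triang (x1*y1 + x2*y2) (x3*y3)).
  pose proof (Rabs_triang (x1*y1) (x2*y2)). lra.
Qed.

Lemma gp_bound vf vb n : forall s s', Rabs (gen_pow vf vb n s s') <= (Mb vf vb)^n.
Proof.
  induction n; intros s [a' b'].
  - cbn. destruct (_ && _)%bool; rewrite ?Rabs_R1, ?Rabs_R0; lra.
  - rewrite gp_S. simpl pow.
    replace (Mb vf vb * Mb vf vb ^ n) with (3 * (Mb vf vb ^ n * Gb vf vb)) by (unfold Mb; ring).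
    apply abs3; auto using gen_bound.
Qed.

Lemma Lop_bound vf vb f B : (forall s, Rabs (f s) <= B) -> forall s, Rabs (Lop vf vb f s) <= Mb vf vb * B.
Proof.
  intros Hf s. unfold Lop.
  replace (Mb vf vb * B) with (3 * (Gb vf vb * B)) by (unfold Mb; ring).
  apply abs3; auto using gen_bound.
Qed.

Lemma iter_bound vf vb f B : (forall s, Rabs (f s) <= B) ->
  forall n s, Rabs (Nat.iter n (Lop vf vb) f s) <= (Mb vf vb)^n * B.
Proof.
  intros Hf n. induction n; intro s.
  - simpl. rewrite Rmult_1_l. auto.
  - rewrite Nat.iter_succ. simpl pow. rewrite Rmult_assoc. apply Lop_bound. auto.
Qed.

Lemma iter_agree vf vb n : forall f g A,
  (forall a b, (b < a)%Z -> (a <= A)%Z -> f (a,b) = g (a,b)) ->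
  forall a b, (b < a)%Z -> (a + Z.of_nat n <= A)%Z ->
  Nat.iter n (Lop vf vb) f (a,b) = Nat.iter n (Lop vf vb) g (a,b).
Proof.
  induction n; intros f g A H a b Hab HA.
  - simpl. apply H; lia.
  - rewrite !Nat.iter_succ. rewrite !Lop_ab.
    rewrite (IHn f g A H (a+1)%Z b) by lia.
    rewrite (IHn f g A H a b) by lia.
    rewrite gen_u. destruct (Z.ltb_spec (b+1) a).
    + rewrite (IHn f g A H a (b+1)%Z) by lia. reflexivity.
    + ring.
Qed.


Fixpoint Lam (p : R) (g : nat) (u : nat -> R) : R :=
  match g with
  | O => u O
  | S g' => (1 - p) * u O + p * Lam p g' (fun m => u (S m))
  end.

Lemma Lam_0 p u : Lam p 0 u = u O.
Proof. reflexivity. Qed.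
Lemma Lam_S p g u : Lam p (S g) u = (1 - p) * u O + p * Lam p g (fun m => u (S m)).
Proof. reflexivity. Qed.

Lemma Lam_ext p g : forall u v, (forall m, u m = v m) -> Lam p g u = Lam p g v.
Proof.
  induction g; intros u v H; simpl; rewrite ?H; auto.
  rewrite (IHg (fun m => u (S m)) (fun m => v (S m))); auto.
Qed.

Lemma Lam_lin3 p g : forall c1 c2 c3 u v w,
  Lam p g (fun m => c1 * u m + c2 * v m + c3 * w m) = c1 * Lam p g u + c2 * Lam p g v + c3 * Lam p g w.
Proof.
  induction g; intros; simpl; [ring|].
  rewrite (IHg c1 c2 c3 (fun m => u (S m)) (fun m => v (S m)) (fun m => w (S m))). ring.
Qed.

Lemma Lam_const p g c : Lam p g (fun _ => c) = c.
Proof. induction g; simpl; [reflexivity| rewrite IHg; ring]. Qed.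

Lemma Lam_bound p g : 0 <= p <= 1 -> forall u B, (forall m, Rabs (u m) <= B) -> Rabs (Lam p g u) <= B.
Proof.
  intros Hp. induction g; intros u B Hu; simpl; auto.
  pose proof (IHg (fun m => u (S m)) B (fun m => Hu (S m))).
  pose proof (Hu O).
  eapply Rle_trans; [apply Rabs_triang|]. rewrite !Rabs_mult.
  rewrite (Rabs_right (1-p)) by lra. rewrite (Rabs_right p) by lra.
  assert ((1-p) * Rabs (u O) <= (1-p) * B) by (apply Rmult_le_compat_l; lra).
  assert (p * Rabs (Lam p g (fun m => u (S m))) <= p * B) by (apply Rmult_le_compat_l; lra).
  lra.
Qed.

Definition Lamb (p : R) (F : state -> R) (s : state) : R :=
  Lam p (Z.to_nat (fst s - snd s - 1)) (fun m => F ((snd s + 1 + Z.of_nat m)%Z, snd s)).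

Lemma LopA0 vf vb F b : Lop vf vb F ((b + 1 + Z.of_nat 0)%Z, b) =
  vf * F ((b + 1 + Z.of_nat 1)%Z, b) - vf * F ((b + 1 + Z.of_nat 0)%Z, b).
Proof.
  rewrite Lop_ab, gen_r, gen_u, gen_d. destruct (Z.ltb_spec (b+1) (b + 1 + Z.of_nat 0)); [lia|].
  replace (b + 1 + Z.of_nat 0 + 1)%Z with (b + 1 + Z.of_nat 1)%Z by lia. ring.
Qed.

Lemma LopAS vf vb F b m : Lop vf vb F ((b + 1 + Z.of_nat (S m))%Z, b) =
  vf * F ((b + 1 + Z.of_nat (S (S m)))%Z, b) + vb * F ((b + 1 + 1 + Z.of_nat m)%Z, (b + 1)%Z)
  + (- (vf + vb)) * F ((b + 1 + Z.of_nat (S m))%Z, b).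
Proof.
  rewrite Lop_ab, gen_r, gen_u, gen_d. destruct (Z.ltb_spec (b+1) (b + 1 + Z.of_nat (S m))); [|lia].
  replace (b + 1 + Z.of_nat (S m) + 1)%Z with (b + 1 + Z.of_nat (S (S m)))%Z by lia.
  replace (F ((b + 1 + Z.of_nat (S m))%Z, (b+1)%Z)) with (F ((b+1+1+Z.of_nat m)%Z, (b+1)%Z)) by (f_equal; f_equal; lia).
  ring.
Qed.

Lemma inter1 a0 a1 : a0 <> 0 -> forall F a b, (b < a)%Z ->
  Lop a0 a1 (Lamb (a1/a0) F) (a,b) = Lamb (a1/a0) (Lop a1 a0 F) (a,b).
Proof.
  intros H0 F a b Hab. set (p := a1/a0).
  assert (Ha1 : a1 = p * a0) by (unfold p; field; auto).
  destruct (Z_of_nat_complete (a - b - 1)) as [g Hg]; [lia|].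
  replace a with (b + 1 + Z.of_nat g)%Z by lia. clear Hab Hg a.
  rewrite Lop_ab, gen_r, gen_u, gen_d. unfold Lamb; cbn [fst snd].
  replace (Z.to_nat (b + 1 + Z.of_nat g + 1 - b - 1)) with (S g) by lia.
  replace (Z.to_nat (b + 1 + Z.of_nat g - b - 1)) with g by lia.
  destruct g as [|g].
  - destruct (Z.ltb_spec (b+1) (b + 1 + Z.of_nat 0)); [lia|].
    rewrite Lam_S, !Lam_0, LopA0. rewrite Ha1. ring.
  - destruct (Z.ltb_spec (b+1) (b + 1 + Z.of_nat (S g))); [|lia].
    replace (Z.to_nat (b + 1 + Z.of_nat (S g) - (b + 1) - 1)) with g by lia.
    rewrite !Lam_S, LopA0.
    rewrite (Lam_ext p g _ _ (fun m => LopAS a1 a0 F b m)).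
    rewrite Lam_lin3.
    rewrite Ha1. ring.
Qed.

Lemma inter_iter a0 a1 : a0 <> 0 -> forall n F a b, (b < a)%Z ->
  Nat.iter n (Lop a0 a1) (Lamb (a1/a0) F) (a,b) = Lamb (a1/a0) (Nat.iter n (Lop a1 a0) F) (a,b).
Proof.
  intros H0 n. induction n; intros F a b Hab.
  - reflexivity.
  - rewrite !Nat.iter_succ_r.
    rewrite (iter_agree a0 a1 n (Lop a0 a1 (Lamb (a1/a0) F)) (Lamb (a1/a0) (Lop a1 a0 F)) (a + Z.of_nat n)%Z).
    + apply IHn; auto.
    + intros x y Hxy _. apply inter1; auto.
    + auto.
    + lia.
Qed.

Lemma FindLam p k H a b : (b < a)%Z ->
  Find k (fun j => Lam p j H) (a,b) = Lamb p (Find k H) (a,b).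
Proof.
  intros Hab. unfold Find, Lamb; cbn [fst snd].
  destruct (Z.eqb_spec b k).
  - subst. destruct (Z.ltb_spec k a); [|lia]. cbn [andb].
    apply Lam_ext. intro m. try rewrite Z.eqb_refl. cbn [andb].
    destruct (Z.ltb_spec k (k + 1 + Z.of_nat m)); [|lia]. cbn [andb fst snd].
    f_equal. lia.
  - cbn [andb]. rewrite Lam_const. reflexivity.
Qed.

Lemma Lam_scal p g : forall c u, Lam p g (fun m => c * u m) = c * Lam p g u.
Proof. induction g; intros; simpl; [ring| rewrite (IHg c (fun m => u (S m))); ring]. Qed.


Lemma exp_series x : is_series (fun n => x ^ n / INR (fact n)) (exp x).
Proof.
  eapply is_series_ext; [|apply (is_exp_Reals x)].
  intro n. simpl. rewrite pow_n_pow. reflexivity.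
Qed.

Lemma ex_series_R_le (a b : nat -> R) : (forall n, Rabs (a n) <= b n) -> ex_series b -> ex_series a.
Proof. intros H Hb. apply (ex_series_le a b); auto. Qed.

Lemma is_series_mult_l (c : R) a l : is_series a l -> is_series (fun n => c * a n) (c * l).
Proof. intro H. exact (is_series_scal_l c a l H). Qed.

Lemma is_series_plusR a b la lb : is_series a la -> is_series b lb -> is_series (fun n => a n + b n) (la + lb).
Proof. intros H1 H2. exact (is_series_plus a b la lb H1 H2). Qed.

Lemma ser_abs_le (x y : nat -> R) Y : (forall n, Rabs (x n) <= y n) -> is_series y Y -> Rabs (Series x) <= Y.
Proof.
  intros H Hy.
  assert (ey : ex_series y) by (exists Y; auto).
  eapply Rle_trans; [apply Series_Rabs|].
  - apply (ex_series_R_le _ y); auto. intro n. rewrite Rabs_Rabsolu. auto.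
  - rewrite <- (is_series_unique y Y Hy). apply Series_le; auto.
    intro n. split; auto using Rabs_pos.
Qed.


Lemma trunc_sum (u : nat -> R) K N : (forall j, (K < j)%nat -> u j = 0) -> (K <= N)%nat ->
  sum_f_R0 u N = sum_f_R0 u K.
Proof.
  intros H. induction N; intros HN.
  - assert (K = 0)%nat by lia. subst. reflexivity.
  - destruct (Nat.eq_dec K (S N)).
    + subst. reflexivity.
    + simpl. rewrite IHN by lia. rewrite (H (S N)) by lia. ring.
Qed.

Lemma sum_abs_bound (u : nat -> R) c N : (forall j, Rabs (u j) <= c) -> Rabs (sum_f_R0 u N) <= INR (S N) * c.
Proof.
  intro H. induction N.
  - simpl. rewrite Rmult_1_l. auto.
  - simpl sum_f_R0. rewrite S_INR.
    eapply Rle_trans; [apply Rabs_triang|]. specialize (H (S N)). lra.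
Qed.

Lemma fub (a : nat -> nat -> R) (b : nat -> R) (J : nat) :
  (forall n j, Rabs (a n j) <= b n) ->
  (forall n j, (n + J < j)%nat -> a n j = 0) ->
  ex_series (fun n => INR (n + J + 1) * b n) ->
  is_series (fun n => sum_f_R0 (a n) (n + J)) (Series (fun j => Series (fun n => a n j))).
Proof.
  intros H1 H2 H3.
  set (c := fun n => INR (n + J + 1) * b n).
  assert (bpos : forall n, 0 <= b n) by (intro n; eapply Rle_trans; [apply Rabs_pos|apply (H1 n O)]).
  assert (cpos : forall n, 0 <= c n) by (intro n; unfold c; apply Rmult_le_pos; auto using pos_INR).
  assert (bc : forall n, b n <= c n).
  { intro n. unfold c. rewrite plus_INR. pose proof (pos_INR (n + J)). specialize (bpos n).
    simpl INR. nra. }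
  assert (exb : ex_series b).
  { apply (ex_series_R_le _ c); auto. intro n. rewrite Rabs_pos_eq; auto. }
  assert (exa : forall j, ex_series (fun n => a n j)).
  { intro j. apply (ex_series_R_le _ b); auto. }
  assert (Gb : forall N n, Rabs (sum_f_R0 (a n) N) <= c n).
  { intros N n. destruct (le_lt_dec N (n + J)).
    - eapply Rle_trans; [apply sum_abs_bound; intro j; apply H1|].
      unfold c. apply Rmult_le_compat_r; auto. apply le_INR. lia.
    - rewrite (trunc_sum _ (n + J) N); [|intros j Hj; apply H2; lia|lia].
      eapply Rle_trans; [apply sum_abs_bound; intro j; apply H1|].
      unfold c. apply Rmult_le_compat_r; auto. apply Req_le. f_equal. lia. }
  set (F := fun n => sum_f_R0 (a n) (n + J)).
  assert (exF : ex_series F) by (apply (ex_series_R_le _ c); auto; intro n; apply Gb).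
  assert (exG : forall N, ex_series (fun n => sum_f_R0 (a n) N)) by (intro N; apply (ex_series_R_le _ c); auto).
  set (A := fun j => Series (fun n => a n j)).
  assert (PS : forall N, sum_f_R0 A N = Series (fun n => sum_f_R0 (a n) N)).
  { induction N.
    - reflexivity.
    - simpl sum_f_R0. rewrite IHN. unfold A. rewrite <- Series_plus; auto. }
  assert (HA : is_series A (Series F)).
  { apply is_series_Reals. intros eps Heps.
    assert (exc : ex_series c) by exact H3.
    pose proof (Series_correct _ exc) as Hc. apply is_series_Reals in Hc.
    destruct (Hc (eps/2)) as [M HM]; [lra|].
    specialize (HM M (le_n M)). unfold R_dist in HM.
    pose proof (Series_incr_n c (S M) (Nat.lt_0_succ M) exc) as Etail. simpl pred in Etail.
    set (tail := Series (fun k => c (S M + k)%nat)) in *.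
    exists (S M + J)%nat. intros N HN. unfold R_dist.
    rewrite PS. rewrite <- Series_minus; auto.
    set (D := fun n => sum_f_R0 (a n) N - F n).
    assert (exD : ex_series D).
    { apply (ex_series_R_le _ (fun n => 2 * c n)).
      - intro n. unfold D. eapply Rle_trans; [apply Rabs_triang|]. rewrite Rabs_Ropp.
        pose proof (Gb N n). pose proof (Gb (n + J)%nat n). unfold F. lra.
      - exists (2 * Series c). apply is_series_mult_l. apply Series_correct; auto. }
    rewrite (Series_incr_n D (S M) (Nat.lt_0_succ M) exD). simpl pred.
    rewrite sum_eq_R0.
    2:{ intros n Hn. unfold D, F. rewrite (trunc_sum _ (n + J) N); [ring| |lia].
        intros j Hj. apply H2. lia. }
    rewrite Rplus_0_l.
    eapply Rle_lt_trans.
    - apply (ser_abs_le _ (fun k => 2 * c (S M + k)%nat) (2 * tail)).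
      + intro n. unfold D. eapply Rle_trans; [apply Rabs_triang|]. rewrite Rabs_Ropp.
        pose proof (Gb N (S M + n)%nat). pose proof (Gb (S M + n + J)%nat (S M + n)%nat). unfold F. lra.
      + apply is_series_mult_l. apply Series_correct. apply (ex_series_incr_n c (S M)). auto.
    - rewrite Rabs_minus_sym in HM. rewrite Etail in HM.
      replace (sum_f_R0 c M + tail - sum_f_R0 c M) with tail in HM by ring.
      apply Rabs_def2 in HM. lra. }
  rewrite (is_series_unique A (Series F) HA). apply Series_correct. auto.
Qed.


Lemma is_series_extR (a b : nat -> R) l : (forall n, a n = b n) -> is_series a l -> is_series b l.
Proof. intros H1 H2. exact (is_series_ext a b l H1 H2). Qed.

Lemma pow2_ge n : INR (S n) <= 2 ^ n.
Proof. induction n; [simpl; lra|]. rewrite !S_INR. simpl pow. pose proof (pos_INR n). rewrite S_INR in IHn. lra. Qed.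

Lemma series_trans vf vb d k h B s : (forall j, Rabs (h j) <= B) ->
  is_series (fun n => d ^ n / INR (fact n) * Nat.iter n (Lop vf vb) (Find k h) s)
    (Series (fun j => trans vf vb d s ((k + 1 + Z.of_nat j)%Z, k) * h j)).
Proof.
  intros Hh. destruct s as [x1 x2].
  set (M := Mb vf vb).
  set (a := fun n j => d ^ n / INR (fact n) * gen_pow vf vb n (x1,x2) ((k + 1 + Z.of_nat j)%Z, k) * h j).
  set (b := fun n => Rabs d ^ n / INR (fact n) * M ^ n * B).
  set (J := Z.to_nat (x1 - k)).
  assert (Bpos : 0 <= B) by (eapply Rle_trans; [apply Rabs_pos|apply (Hh O)]).
  assert (Mpos : 0 <= M) by apply Mb_pos.
  assert (factpos : forall n, 0 < INR (fact n)) by (intro n; apply lt_0_INR, lt_O_fact).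
  assert (H1 : forall n j, Rabs (a n j) <= b n).
  { intros n j. unfold a, b. unfold Rdiv. rewrite !Rabs_mult, Rabs_inv, <- RPow_abs.
    rewrite (Rabs_pos_eq (INR (fact n))) by (left; auto).
    pose proof (gp_bound vf vb n (x1,x2) ((k + 1 + Z.of_nat j)%Z, k)). fold M in H.
    apply Rmult_le_compat; auto using Rabs_pos.
    - apply Rmult_le_pos; [apply Rmult_le_pos; [apply pow_le, Rabs_pos| left; apply Rinv_0_lt_compat; auto]|apply Rabs_pos].
    - apply Rmult_le_compat_l; auto. apply Rmult_le_pos; [apply pow_le, Rabs_pos| left; apply Rinv_0_lt_compat; auto]. }
  assert (H2 : forall n j, (n + J < j)%nat -> a n j = 0).
  { intros n j Hj. unfold a. rewrite gp_supp; [ring|]. unfold J in Hj. lia. }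
  assert (H3 : ex_series (fun n => INR (n + J + 1) * b n)).
  { apply (ex_series_R_le _ (fun n => (INR (J + 1) * B) * ((2 * Rabs d * M) ^ n / INR (fact n)))).
    - intro n. unfold b. rewrite Rabs_pos_eq.
      2:{ apply Rmult_le_pos; [apply pos_INR|]. apply Rmult_le_pos; auto.
          apply Rmult_le_pos; [|apply pow_le; auto]. apply Rmult_le_pos; [apply pow_le, Rabs_pos| left; apply Rinv_0_lt_compat; auto]. }
      rewrite !Rpow_mult_distr.
      pose proof (pow2_ge n). rewrite S_INR in H. rewrite !plus_INR. simpl (INR 1).
      set (X := Rabs d ^ n / INR (fact n) * M ^ n * B).
      assert (X >= 0).
      { unfold X. apply Rle_ge. apply Rmult_le_pos; auto. apply Rmult_le_pos; [|apply pow_le; auto].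
        apply Rmult_le_pos; [apply pow_le, Rabs_pos| left; apply Rinv_0_lt_compat; auto]. }
      replace ((INR J + 1) * B * (2 ^ n * Rabs d ^ n * M ^ n / INR (fact n))) with ((INR J + 1) * 2 ^ n * X)
        by (unfold X; field; apply Rgt_not_eq; exact (factpos n)).
      pose proof (pos_INR n). pose proof (pos_INR J).
      apply Rmult_le_compat_r; [lra|]. nra.
    - exists (INR (J + 1) * B * exp (2 * Rabs d * M)). apply is_series_mult_l. apply exp_series. }
  pose proof (fub a b J H1 H2 H3) as Hf.
  assert (E2 : Series (fun j => Series (fun n => a n j)) = Series (fun j => trans vf vb d (x1,x2) ((k + 1 + Z.of_nat j)%Z, k) * h j)).
  { apply Series_ext. intro j. unfold a, trans. apply Series_scal_r. }
  rewrite <- E2. eapply is_series_ext; [|exact Hf].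
  intro n. simpl.
  rewrite (sum_eq _ (fun j => d ^ n / INR (fact n) * (gen_pow vf vb n (x1,x2) ((k + 1 + Z.of_nat j)%Z, k) * h j))).
  2:{ intros; unfold a; ring. }
  rewrite sum_scal_l. rewrite sum_iter; [reflexivity|]. unfold J. lia.
Qed.

Lemma Find_bound k h B : (forall j, Rabs (h j) <= B) -> forall s, Rabs (Find k h s) <= B.
Proof.
  intros H s. unfold Find. destruct (_ && _)%bool; auto.
  rewrite Rabs_R0. eapply Rle_trans; [apply Rabs_pos|apply (H O)].
Qed.

Fixpoint bnd (M : R) (l : list (R * Z)) : R :=
  match l with nil => 1 | (d, k) :: r => exp (M * Rabs d) * bnd M r end.

Lemma bfdd_bound vf vb l : forall s, Rabs (back_fdd vf vb s l) <= bnd (Mb vf vb) l.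
Proof.
  induction l as [|[d k] r IH]; intro s.
  - simpl. rewrite Rabs_R1. lra.
  - cbn [back_fdd bnd].
    set (h := fun j : nat => back_fdd vf vb ((k + 1 + Z.of_nat j)%Z, k) r).
    change (Rabs (Series (fun j => trans vf vb d s ((k + 1 + Z.of_nat j)%Z, k) * h j)) <= exp (Mb vf vb * Rabs d) * bnd (Mb vf vb) r).
    assert (Hh : forall j, Rabs (h j) <= bnd (Mb vf vb) r) by (intro; apply IH).
    rewrite <- (is_series_unique _ _ (series_trans vf vb d k h _ s Hh)).
    apply (ser_abs_le _ (fun n => ((Mb vf vb * Rabs d) ^ n / INR (fact n)) * bnd (Mb vf vb) r)).
    + intro n. rewrite Rabs_mult.
      pose proof (iter_bound vf vb _ _ (Find_bound k h _ Hh) n s).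
      assert (factpos : 0 < INR (fact n)) by (apply lt_0_INR, lt_O_fact).
      unfold Rdiv. rewrite Rabs_mult, Rabs_inv, <- RPow_abs, (Rabs_pos_eq (INR (fact n))) by lra.
      rewrite Rpow_mult_distr.
      replace ((Mb vf vb ^ n * Rabs d ^ n) * / INR (fact n) * bnd (Mb vf vb) r)
        with ((Rabs d ^ n * / INR (fact n)) * (Mb vf vb ^ n * bnd (Mb vf vb) r)) by ring.
      apply Rmult_le_compat_l; auto.
      apply Rmult_le_pos; [apply pow_le, Rabs_pos| left; apply Rinv_0_lt_compat; auto].
    + apply is_series_scal_r. apply exp_series.
Qed.

Lemma Lam_series p g : forall (U : nat -> nat -> R) V, (forall m, is_series (U m) (V m)) ->
  is_series (fun n => Lam p g (fun m => U m n)) (Lam p g V).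
Proof.
  induction g; intros U V H.
  - simpl. apply H.
  - simpl. apply is_series_plusR.
    + apply is_series_mult_l. apply H.
    + apply is_series_mult_l. apply (IHg (fun m => U (S m)) (fun m => V (S m))). intro; apply H.
Qed.

Lemma Lam_geom p : 0 <= p < 1 -> forall g u,
  is_series (fun n => (1 - p) * p ^ n * u (Nat.min n g)) (Lam p g u).
Proof.
  intros Hp g. induction g; intro u.
  - assert (H : is_series (fun n => ((1 - p) * u O) * p ^ n) (((1 - p) * u O) * / (1 - p))).
    { apply is_series_mult_l. apply is_series_geom. rewrite Rabs_pos_eq; lra. }
    replace (Lam p 0 u) with (((1 - p) * u O) * / (1 - p)) by (simpl; field; lra).
    eapply is_series_extR; [|exact H]. intro n. rewrite Nat.min_0_r. ring.
  - specialize (IHg (fun m => u (S m))).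
    assert (HS : is_series (fun n => (1 - p) * p ^ (S n) * u (Nat.min (S n) (S g))) (p * Lam p g (fun m => u (S m)))).
    { eapply is_series_extR; [|apply (is_series_mult_l p _ _ IHg)].
      intro n. simpl. ring. }
    assert (ex : ex_series (fun n => (1 - p) * p ^ n * u (Nat.min n (S g)))).
    { apply ex_series_incr_1. exists (p * Lam p g (fun m => u (S m))). exact HS. }
    pose proof (Series_correct _ ex) as Hc.
    rewrite Series_incr_1 in Hc by auto.
    rewrite (is_series_unique _ _ HS) in Hc.
    replace (Lam p (S g) u) with ((1 - p) * p ^ 0 * u (Nat.min 0 (S g)) + p * Lam p g (fun m => u (S m))) by (simpl; ring).
    exact Hc.
Qed.


Lemma main_gen a0 a1 : 0 < a1 -> a1 < a0 -> forall l x1 x2, (x2 < x1)%Z ->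
  back_fdd a0 a1 (x1,x2) l = Lamb (a1/a0) (fun s => back_fdd a1 a0 s l) (x1,x2).
Proof.
  intros Ha1 Ha0. set (p := a1/a0).
  assert (a0ne : a0 <> 0) by lra.
  assert (Hp : 0 <= p <= 1).
  { unfold p. split; [apply Rlt_le, Rdiv_lt_0_compat; lra|].
    apply Rlt_le. apply (Rmult_lt_reg_r a0); [lra|]. unfold Rdiv. rewrite Rmult_assoc, Rinv_l by lra. lra. }
  induction l as [|[d k] r IH]; intros x1 x2 Hx.
  - unfold Lamb. cbn [back_fdd fst snd]. rewrite Lam_const. reflexivity.
  - cbn [back_fdd].
    set (H := fun m : nat => back_fdd a1 a0 ((k + 1 + Z.of_nat m)%Z, k) r).
    assert (HB : forall m, Rabs (H m) <= bnd (Mb a1 a0) r) by (intro; apply bfdd_bound).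
    rewrite (Series_ext _ (fun j => trans a0 a1 d (x1, x2) ((k + 1 + Z.of_nat j)%Z, k) * Lam p j H)).
    2:{ intro j. f_equal. rewrite IH by lia. unfold Lamb; cbn [fst snd].
        replace (Z.to_nat (k + 1 + Z.of_nat j - k - 1)) with j by lia. reflexivity. }
    rewrite <- (is_series_unique _ _ (series_trans a0 a1 d k (fun j => Lam p j H) _ (x1,x2)
                  (fun j => Lam_bound p j Hp H _ HB))).
    unfold Lamb; cbn [fst snd back_fdd].
    set (g0 := Z.to_nat (x1 - x2 - 1)).
    transitivity (Series (fun n => Lam p g0 (fun m =>
       d ^ n / INR (fact n) * Nat.iter n (Lop a1 a0) (Find k H) ((x2 + 1 + Z.of_nat m)%Z, x2)))).
    2:{ apply is_series_unique.
        exact (Lam_series p g0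
       (fun m n => d ^ n / INR (fact n) * Nat.iter n (Lop a1 a0) (Find k H) ((x2 + 1 + Z.of_nat m)%Z, x2))
       _ (fun m => series_trans a1 a0 d k H _ ((x2 + 1 + Z.of_nat m)%Z, x2) HB)). }
    apply Series_ext. intro n. rewrite Lam_scal. f_equal.
    rewrite (iter_agree a0 a1 n _ (Lamb p (Find k H)) (x1 + Z.of_nat n)%Z).
    + unfold p. rewrite inter_iter by (auto; lia). reflexivity.
    + intros a b Hab _. apply FindLam. auto.
    + auto.
    + lia.
Qed.

Theorem theorem1p2 (a0 a1 : R) (x1 x2 : Z) :
  0 < a1 -> a1 < a0 -> (x2 < x1)%Z ->
  forall l : list (R * Z),
    List.Forall (fun p : R * Z => 0 <= fst p) l ->
    back_fdd a0 a1 (x1, x2) l =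
    Series (fun g : nat =>
      (1 - a1 / a0) * (a1 / a0) ^ g
      * back_fdd a1 a0 ((x2 + 1 + Z.min (Z.of_nat g) (x1 - x2 - 1))%Z, x2) l).
Proof.
  intros Ha1 Ha0 Hx l _.
  rewrite main_gen by auto. unfold Lamb; cbn [fst snd].
  set (p := a1/a0).
  assert (Hp : 0 <= p < 1).
  { unfold p. split; [apply Rlt_le, Rdiv_lt_0_compat; lra|].
    apply (Rmult_lt_reg_r a0); [lra|]. unfold Rdiv. rewrite Rmult_assoc, Rinv_l by lra. lra. }
  symmetry. apply is_series_unique.
  eapply is_series_extR; [|apply (Lam_geom p Hp (Z.to_nat (x1 - x2 - 1)))].
  intro n. cbv beta. f_equal. f_equal. f_equal. lia.
Qed.
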